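(* Let $\rho\in(0,1)$, $\phi:(0,1)\to\mathbb{R}_+$, $\alpha\geqslant0$, and let $\{\psi_t\}_{t\geqslant0}$ be a preconditioned first-order method satisfying $(\rho,\phi(\rho),\alpha)$-linear convergence. Then for any $x_0\in\mathbb{R}^d$, $m\geqslant1$ and $S\in\mathbb{R}^{m\times n}$ such that $\|C_S-I_d\|_2\leqslant\sqrt\rho$, the iterates $x_{t+1}=\psi_t(x_0,\dots,x_t;H_S)$ satisfy, for all $t\geqslant0$, $$\widetilde\delta_t\leqslant c(\alpha,\rho)\,\phi(\rho)^t\,\widetilde\delta_0,$$ where $\widetilde\delta_t=\frac12\nabla f(x_t)^\top H_S^{-1}\nabla f(x_t)$ and $c(\alpha,\rho)=\frac{1+\sqrt\rho}{1-\sqrt\rho}\,\alpha$.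
   Context: Let $A\in\mathbb{R}^{n\times d}$ with $n\geqslant d$, $b\in\mathbb{R}^d$, $\Lambda\in\mathbb{R}^{d\times d}$ diagonal with $\Lambda\succeq I_d$, and $\nu>0$. Set $H=A^\top A+\nu^2\Lambda$, $f(x)=\frac12 x^\top Hx-b^\top x$, $x^*=H^{-1}b$. For $S\in\mathbb{R}^{m\times n}$ set $H_S=A^\top S^\top SA+\nu^2\Lambda$ and $C_S=H^{-1/2}H_SH^{-1/2}$. For an iterate $x_t$, $\delta_t=\frac12\|x_t-x^*\|_H^2$ with $\|z\|_H^2=z^\top Hz$. A preconditioned first-order method is a sequence of functions $\{\psi_t\}_{t\geqslant0}$ such that for any preconditioner $P\succ0$ and any $x_0\in\mathbb{R}^d$ the iterates $x_{t+1}=\psi_t(x_0,\dots,x_t;P)$ satisfy $x_{t+1}\in x_0+P^{-1}\,\mathrm{span}\{\nabla f(x_0),\dots,\nabla f(x_t)\}$ for all $t\geqslant0$. It satisfies $(\rho,\phi(\rho),\alpha)$-linear convergence if for every $x_0\in\mathbb{R}^d$, $m\geqslant1$ and $S\in\mathbb{R}^{m\times n}$ with $\|C_S-I_d\|_2\leqslant\max\{\sqrt\rho,\rho\}$, the iterates $x_{t+1}=\psi_t(x_0,\dots,x_t;H_S)$ satisfy $\delta_t\leqslant\alpha\,\phi(\rho)^t\,\delta_0$ for all $t\geqslant0$. *)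

(* Defs.v *)
From HB Require Import structures.
From mathcomp Require Import all_boot all_order all_algebra.
From mathcomp Require Import classical_sets boolp reals.
Set Implicit Arguments. Unset Strict Implicit. Unset Printing Implicit Defensive.
Import Order.TTheory GRing.Theory Num.Theory.
Local Open Scope ring_scope.
Local Open Scope classical_set_scope.

Section Defs.
Variable R : realType.

Definition qform (k : nat) (M : 'M[R]_k) (x y : 'cV[R]_k) : R := (x^T *m M *m y) 0 0.

Definition vnorm (k : nat) (x : 'cV[R]_k) : R := Num.sqrt ((x^T *m x) 0 0).

Definition opnorm2 (k : nat) (M : 'M[R]_k) : R :=
  sup [set vnorm (M *m x) / vnorm x | x in [set x : 'cV[R]_k | x != 0]].

Definition posdef (k : nat) (M : 'M[R]_k) : Prop :=
  M^T = M /\ forall x : 'cV[R]_k, x != 0 -> 0 < qform M x x.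

Definition invsqrtm (k : nat) (M : 'M[R]_k) : 'M[R]_k :=
  xget 0 [set Q : 'M[R]_k | posdef Q /\ Q *m Q = invmx M].

Variables (n d : nat) (A : 'M[R]_(n, d)) (b : 'cV[R]_d) (Lam : 'M[R]_d) (nu : R).

Definition Hmat : 'M[R]_d := A^T *m A + (nu ^+ 2) *: Lam.
Definition fobj (x : 'cV[R]_d) : R := 2^-1 * qform Hmat x x - (b^T *m x) 0 0.
Definition gradf (x : 'cV[R]_d) : 'cV[R]_d := Hmat *m x - b.
Definition xstar : 'cV[R]_d := invmx Hmat *m b.
Definition HS (m : nat) (S : 'M[R]_(m, n)) : 'M[R]_d :=
  A^T *m S^T *m S *m A + (nu ^+ 2) *: Lam.
Definition CS (m : nat) (S : 'M[R]_(m, n)) : 'M[R]_d :=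
  invsqrtm Hmat *m HS S *m invsqrtm Hmat.
Definition delta (x : 'cV[R]_d) : R := 2^-1 * qform Hmat (x - xstar) (x - xstar).
Definition delta_tilde (m : nat) (S : 'M[R]_(m, n)) (x : 'cV[R]_d) : R :=
  2^-1 * qform (invmx (HS S)) (gradf x) (gradf x).

(* A method is psi : nat -> seq of past iterates [:: x_0; ...; x_t] -> P -> x_{t+1} *)
Definition method := nat -> seq 'cV[R]_d -> 'M[R]_d -> 'cV[R]_d.

Fixpoint history (psi : method) (x0 : 'cV[R]_d) (P : 'M[R]_d) (t : nat) : seq 'cV[R]_d :=
  match t with
  | 0 => [:: x0]
  | t'.+1 => let h := history psi x0 P t' in rcons h (psi t' h P)
  end.

Definition iterate (psi : method) (x0 : 'cV[R]_d) (P : 'M[R]_d) (t : nat) : 'cV[R]_d :=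
  last x0 (history psi x0 P t).

Definition precond_first_order (psi : method) : Prop :=
  forall (P : 'M[R]_d) (x0 : 'cV[R]_d), posdef P -> forall t : nat,
    exists c : 'I_t.+1 -> R,
      iterate psi x0 P t.+1 =
      x0 + invmx P *m (\sum_(i < t.+1) c i *: gradf (iterate psi x0 P i)).

Definition linear_convergence (psi : method) (rho phirho alpha : R) : Prop :=
  forall (x0 : 'cV[R]_d) (m : nat) (S : 'M[R]_(m, n)),
    (1 <= m)%N ->
    opnorm2 (CS S - 1%:M) <= Num.max (Num.sqrt rho) rho ->
    forall t : nat,
      delta (iterate psi x0 (HS S) t) <= alpha * phirho ^+ t * delta x0.

End Defs.

(* Main.v *)
Require Import Defs.
From HB Require Import structures.
From mathcomp Require Import all_boot all_order all_algebra.
From mathcomp Require Import classical_sets boolp reals ring lra.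
Import Order.TTheory GRing.Theory Num.Theory.
Local Open Scope ring_scope.
Set Implicit Arguments. Unset Strict Implicit.
Local Open Scope classical_set_scope.

Section Aux.
Variable R : realType.
Implicit Types (k : nat).

Lemma tr11 (a : 'M[R]_1) : a^T 0 0 = a 0 0.
Proof. by rewrite mxE. Qed.

Lemma qsym k (M : 'M[R]_k) x y : M^T = M -> qform M y x = qform M x y.
Proof.
move=> hM; rewrite /qform -tr11 !trmx_mul trmxK hM mulmxA //.
Qed.

Lemma qexp k (M : 'M[R]_k) (t : R) u v :
  qform M (t *: u - v) (t *: u - v) =
  t ^+ 2 * qform M u u - t * qform M u v - t * qform M v u + qform M v v.
Proof.
rewrite /qform; have -> : (t *: u - v)^T = t *: u^T - v^T by apply/matrixP=> i j; rewrite !mxE.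
rewrite /qform !(mulmxBl, mulmxBr) -!scalemxAl -!scalemxAr.
rewrite !(mxE, scalerA). ring.
Qed.

Lemma qcs k (M : 'M[R]_k) (t : R) u v : M^T = M -> (forall x, 0 <= qform M x x) ->
  0 < t -> 2 * qform M u v <= t * qform M u u + qform M v v / t.
Proof.
move=> hM hpsd ht; have := hpsd (t *: u - v); rewrite qexp (qsym u v hM).
have e : t * (1/t) = 1 by rewrite mul1r divff // lt0r_neq0.
have hw : 0 < 1 / t by rewrite mul1r invr_gt0.
have -> : qform M v v / t = qform M v v * (1/t) by rewrite mul1r.
move: (qform M u u) (qform M u v) (qform M v v) (1/t) e hw => a b c w e hw h.
have h2 := mulr_ge0 (ltW hw) h.
have E : w * (t ^+ 2 * a - t * b - t * b + c) = (t*w) * (t*a) - (t*w)*(2*b) + c * w by ring.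
rewrite E e !mul1r in h2. lra.
Qed.

Definition dot k (x : 'cV[R]_k) : R := (x^T *m x) 0 0.

Lemma dotE k (x : 'cV[R]_k) : dot x = \sum_i x i 0 ^+ 2.
Proof. by rewrite /dot mxE; apply: eq_bigr => i _; rewrite mxE expr2. Qed.

Lemma dot_ge0 k (x : 'cV[R]_k) : 0 <= dot x.
Proof. by rewrite dotE; apply: sumr_ge0 => i _; rewrite sqr_ge0. Qed.

Lemma coord_le k (x : 'cV[R]_k) i : x i 0 ^+ 2 <= dot x.
Proof.
rewrite dotE (bigD1 i) //= lerDl. by apply: sumr_ge0 => j _; rewrite sqr_ge0.
Qed.

Lemma dot_gt0 k (x : 'cV[R]_k) : x != 0 -> 0 < dot x.
Proof.
move=> hx; have [i hi] : exists i, x i 0 != 0.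
  case: (pselect (exists i, x i 0 != 0)) => // hn; exfalso; move/eqP: hx; apply.
  apply/matrixP => i j; rewrite (ord1 j) mxE; apply/eqP; apply: contra_notT hn => h.
  by exists i.
have := coord_le x i; have : 0 < x i 0 ^+ 2 by rewrite exprn_even_gt0.
move=> h1 h2; exact: lt_le_trans h1 h2.
Qed.

Lemma vnorm_ge0 k (x : 'cV[R]_k) : 0 <= vnorm x.
Proof. exact: sqrtr_ge0. Qed.

Lemma vnorm_sq k (x : 'cV[R]_k) : vnorm x ^+ 2 = dot x.
Proof. by rewrite /vnorm sqr_sqrtr //; exact: dot_ge0. Qed.

Lemma vnorm_gt0 k (x : 'cV[R]_k) : x != 0 -> 0 < vnorm x.
Proof. by move=> hx; rewrite /vnorm sqrtr_gt0; exact: dot_gt0. Qed.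

Lemma absc_le k (x : 'cV[R]_k) i : `|x i 0| <= vnorm x.
Proof. by rewrite -sqrtr_sqr /vnorm ler_wsqrtr // coord_le. Qed.

Lemma sumsq_le k (a : 'I_k -> R) : (forall i, 0 <= a i) ->
  \sum_i a i ^+ 2 <= (\sum_i a i) ^+ 2.
Proof.
move=> ha.
pose K := fun (y1 y2 : R) => 0 <= y2 /\ y1 <= y2 ^+ 2.
suff : K (\sum_i a i ^+ 2) (\sum_i a i) by case.
apply: (big_rec2 K); first by split; rewrite ?expr0n /=.
move=> i y1 y2 _ [h1 h2]; have := ha i => h3; split; first by rewrite addr_ge0.
rewrite !expr2 in h2 *; nra.
Qed.

Lemma vnorm_le_sum k (v : 'cV[R]_k) : vnorm v <= \sum_i `|v i 0|.
Proof.
have h0 : 0 <= \sum_i `|v i 0| by apply: sumr_ge0 => i _.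
rewrite -(ger0_norm h0) -sqrtr_sqr /vnorm ler_wsqrtr //.
rewrite -/(dot v) dotE.
have -> : \sum_i v i 0 ^+ 2 = \sum_i `|v i 0| ^+ 2.
  by apply: eq_bigr => i _; rewrite real_normK // num_real.
by apply: sumsq_le.
Qed.

Lemma vnorm_mul k (M : 'M[R]_k) (x : 'cV[R]_k) :
  vnorm (M *m x) <= (\sum_i \sum_j `|M i j|) * vnorm x.
Proof.
apply: (le_trans (vnorm_le_sum _)); rewrite mulr_suml; apply: ler_sum => i _.
rewrite mulr_suml mxE; apply: (le_trans (ler_norm_sum _ _ _)); apply: ler_sum => j _.
by rewrite normrM ler_wpM2l // absc_le.
Qed.

Lemma opnorm_bound k (M : 'M[R]_k) (s : R) : 0 <= s -> opnorm2 M <= s ->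
  forall x, dot (M *m x) <= s ^+ 2 * dot x.
Proof.
move=> hs hop x.
case: (pselect (x = 0)) => [->|hx].
  by rewrite mulmx0 /dot !mulmx0 mxE mulr0.
move/eqP: hx => hx.
have hvx := vnorm_gt0 hx.
set E := [set vnorm (M *m x) / vnorm x | x in [set x : 'cV[R]_k | x != 0]].
have hE : has_sup E.
  split; first by exists (vnorm (M *m x) / vnorm x); exists x.
  exists (\sum_i \sum_j `|M i j|) => _ [y /= hy <-].
  by rewrite ler_pdivrMr ?vnorm_gt0 // vnorm_mul.
have hle : vnorm (M *m x) / vnorm x <= s.
  apply: le_trans hop; apply: sup_upper_bound => //; by exists x.
rewrite ler_pdivrMr // in hle.
rewrite -!vnorm_sq; have := vnorm_ge0 (M *m x) => h0.
rewrite !expr2; nra.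
Qed.


Lemma qform_lam k (L : 'M[R]_k) x : is_diag_mx L -> (forall i, 1 <= L i i) ->
  dot x <= qform L x x.
Proof.
move=> /is_diag_mxP hd hge; rewrite dotE /qform mxE; apply: ler_sum => j _.
rewrite mxE (bigD1 j) //= big1 ?addr0; last first.
  by move=> i hij; rewrite hd ?mulr0 // eq_sym.
rewrite mxE expr2; have := hge j; have := sqr_ge0 (x j 0); rewrite expr2 => h1 h2.
nra.
Qed.

Lemma qG p k (B : 'M[R]_(p,k)) (L : 'M_k) c x :
  qform (B^T *m B + c *: L) x x = dot (B *m x) + c * qform L x x.
Proof.
rewrite /qform /dot trmx_mul mulmxDr mulmxDl -scalemxAr -scalemxAl !mulmxA mxE; congr (_ + _); rewrite mxE.
by [].
Qed.

Lemma G_sym p k (B : 'M[R]_(p,k)) (L : 'M_k) c : is_diag_mx L ->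
  (B^T *m B + c *: L)^T = B^T *m B + c *: L.
Proof.
move=> /is_diag_mxP hd.
have hP : (B^T *m B)^T = B^T *m B by rewrite trmx_mul trmxK.
set P := B^T *m B in hP *; clearbody P.
apply/matrixP => i j; rewrite !mxE.
have -> : P j i = P i j by rewrite -[in LHS]hP mxE.
case: (eqVneq i j) => [-> // | hij].
by rewrite !hd // eq_sym.
Qed.

Lemma G_pd p k (B : 'M[R]_(p,k)) (L : 'M_k) (nu : R) x : is_diag_mx L ->
  (forall i, 1 <= L i i) -> 0 < nu -> x != 0 ->
  0 < qform (B^T *m B + nu ^+ 2 *: L) x x.
Proof.
move=> hd hge hnu hx; rewrite qG.
have h1 := dot_ge0 (B *m x); have h2 := dot_gt0 hx; have h3 := qform_lam x hd hge.
have h4 : 0 < nu ^+ 2 by rewrite exprn_gt0.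
nra.
Qed.

Lemma unit_of_pd k (M : 'M[R]_k) : M^T = M ->
  (forall x, x != 0 -> 0 < qform M x x) -> M \in unitmx.
Proof.
move=> hM hpd; rewrite -row_free_unit; apply: inj_row_free => v hv.
apply/eqP; rewrite -trmx_eq0; apply/negPn/negP => hne.
have := hpd _ hne; rewrite /qform trmxK -mulmxA.
have -> : M *m v^T = 0 by rewrite -hM -trmx_mul hv trmx0.
by rewrite mulmx0 mxE ltxx.
Qed.

Lemma qinv k (M : 'M[R]_k) g : M^T = M -> M \in unitmx ->
  qform M (invmx M *m g) (invmx M *m g) = qform (invmx M) g g.
Proof.
move=> hM hu; rewrite /qform trmx_mul trmx_inv hM -!mulmxA (mulmxA M) mulmxV //.
by rewrite mul1mx.
Qed.

Lemma inv_order k (A B : 'M[R]_k) (c : R) : A^T = A -> B^T = B ->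
  A \in unitmx -> B \in unitmx -> (forall x, 0 <= qform A x x) -> 0 < c ->
  (forall v, qform A v v <= c * qform B v v) ->
  forall g, qform (invmx B) g g <= c * qform (invmx A) g g.
Proof.
move=> hA hB uA uB hpsd hc hle g.
set u := invmx A *m g; set v := invmx B *m g.
have ha : qform A u u = qform (invmx A) g g by rewrite /u qinv.
have hb : qform B v v = qform (invmx B) g g by rewrite /v qinv.
have hav : qform A v u = qform B v v.
  by rewrite /qform /u -!mulmxA mulKVmx // mulKVmx.
have ht : 0 < c^-1 by rewrite invr_gt0.
have := qcs v u hA hpsd ht; rewrite hav invrK.
have h1 := hle v.
have h2 : c^-1 * qform A v v <= c^-1 * (c * qform B v v) by rewrite ler_wpM2l // ltW.
rewrite mulrA mulVf ?mul1r in h2; last by rewrite lt0r_neq0.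
rewrite -hb -ha; lra.
Qed.

Lemma q1 k (a b : 'cV[R]_k) : qform 1%:M a b = (a^T *m b) 0 0.
Proof. by rewrite /qform mulmx1. Qed.

Lemma dotN k (z : 'cV[R]_k) : dot (- z) = dot z.
Proof.
rewrite /dot; have -> : (- z)^T = - z^T by apply/matrixP=> i j; rewrite !mxE.
by rewrite /dot mulNmx mulmxN opprK.
Qed.

Lemma cs1 k (y z : 'cV[R]_k) (s : R) : 0 < s -> dot z <= s ^+ 2 * dot y ->
  2 * (y^T *m z) 0 0 <= 2 * s * dot y.
Proof.
move=> hs hz.
have p1 : forall x : 'cV[R]_k, 0 <= qform 1%:M x x by move=> x; rewrite q1; exact: dot_ge0.
have := qcs y z (trmx1 _ _) p1 hs.
rewrite !q1 -!/(dot _).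
have h : dot z / s <= s * dot y.
  by rewrite ler_pdivrMr // mulrAC -expr2.
move=> h2; lra.
Qed.

Lemma loewner k (H HS Q : 'M[R]_k) s : H^T = H -> H \in unitmx -> Q^T = Q ->
  Q *m Q = invmx H -> 0 < s -> opnorm2 (Q *m HS *m Q - 1%:M) <= s ->
  forall w, qform HS w w - qform H w w <= s * qform H w w /\
            qform H w w - qform HS w w <= s * qform H w w.
Proof.
move=> hH uH hQ hQQ hs hop w.
set y := Q *m (H *m w).
have hQy : Q *m y = w by rewrite /y mulmxA hQQ mulmxA mulVmx ?mul1mx.
have hy1 : dot y = qform H w w.
  rewrite /dot /y !trmx_mul hQ hH !mulmxA -(mulmxA _ Q Q) hQQ.
  by rewrite -(mulmxA _ (invmx H) H) mulVmx // mulmx1.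
have e : y^T *m Q = w^T by rewrite -[Q in LHS]hQ -trmx_mul hQy.
have hyC : (y^T *m ((Q *m HS *m Q - 1%:M) *m y)) 0 0 = qform HS w w - qform H w w.
  rewrite mulmxBl mulmxBr mul1mx mxE -hy1 /dot /qform.
  have -> : (- (y^T *m y)) 0 0 = - (y^T *m y) 0 0 by rewrite mxE.
  congr (_ - _).
  by rewrite -(mulmxA (Q *m HS) Q y) hQy !mulmxA e.
have hz := opnorm_bound (ltW hs) hop y.
have h1 := cs1 hs hz.
rewrite -dotN in hz.
have h2 := cs1 hs hz.
rewrite mulmxN mxE hyC hy1 in h2.
rewrite hyC hy1 in h1.
split; lra.
Qed.
End Aux.

Unset Implicit Arguments.
Local Close Scope classical_set_scope.

Lemma q00 (R : realType) k (M : 'M[R]_k) : qform M 0 0 = 0.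
Proof. by rewrite /qform mulmx0 mxE. Qed.

Theorem corollary2p5 (R : realType) (n d : nat) (A : 'M[R]_(n, d)) (b : 'cV[R]_d)
  (Lam : 'M[R]_d) (nu : R)
  (hnd : (d <= n)%N)
  (hLdiag : is_diag_mx Lam) (hLge : forall i : 'I_d, 1 <= Lam i i)
  (hnu : 0 < nu)
  (rho : R) (phi : R -> R) (alpha : R)
  (hrho : 0 < rho < 1)
  (hphi : forall r : R, 0 < r < 1 -> 0 <= phi r)
  (halpha : 0 <= alpha)
  (psi : method R d)
  (hpsi : precond_first_order A b Lam nu psi)
  (hconv : linear_convergence A b Lam nu psi rho (phi rho) alpha) :
  forall (x0 : 'cV[R]_d) (m : nat) (S : 'M[R]_(m, n)),
    (1 <= m)%N ->
    opnorm2 (CS A Lam nu S - 1%:M) <= Num.sqrt rho ->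
    forall t : nat,
      delta_tilde A b Lam nu S (iterate psi x0 (HS A Lam nu S) t)
      <= (1 + Num.sqrt rho) / (1 - Num.sqrt rho) * alpha * phi rho ^+ t
         * delta_tilde A b Lam nu S x0.
Proof.
move=> x0 m S hm hS t.
have hr0 : 0 < rho by case/andP: hrho.
have hr1 : rho < 1 by case/andP: hrho.
set s := Num.sqrt rho.
have hs0 : 0 < s by rewrite sqrtr_gt0.
have hss : s ^+ 2 = rho by rewrite sqr_sqrtr // ltW.
have hs1 : s < 1 by rewrite !expr2 in hss; nra.
have hHsym : (Hmat A Lam nu)^T = Hmat A Lam nu by exact: G_sym.
have hHpd : forall x, x != 0 -> 0 < qform (Hmat A Lam nu) x x.
  by move=> x hx; apply: G_pd.
have hHpsd : forall x, 0 <= qform (Hmat A Lam nu) x x.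
  move=> x; case: (pselect (x = 0)) => [->|/eqP hx]; first by rewrite q00.
  exact: ltW (hHpd x hx).
have uH := unit_of_pd hHsym hHpd.
have eHS : HS A Lam nu S = (S *m A)^T *m (S *m A) + nu ^+ 2 *: Lam.
  by rewrite /HS trmx_mul !mulmxA.
have hSsym : (HS A Lam nu S)^T = HS A Lam nu S by rewrite eHS; exact: G_sym.
have hSpd : forall x, x != 0 -> 0 < qform (HS A Lam nu S) x x.
  by move=> x hx; rewrite eHS; apply: G_pd.
have hSpsd : forall x, 0 <= qform (HS A Lam nu S) x x.
  move=> x; case: (pselect (x = 0)) => [->|/eqP hx]; first by rewrite q00.
  exact: ltW (hSpd x hx).
have uS := unit_of_pd hSsym hSpd.
have hdelta : forall x, delta A b Lam nu x =
    2^-1 * qform (invmx (Hmat A Lam nu)) (gradf A b Lam nu x) (gradf A b Lam nu x).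
  move=> x; rewrite /delta -qinv //; congr (_ * _).
  have -> : invmx (Hmat A Lam nu) *m gradf A b Lam nu x = x - xstar A b Lam nu.
    by rewrite /gradf mulmxBr mulKmx.
  by [].
have hmax : s <= Num.max (Num.sqrt rho) rho by rewrite le_max lexx.
have hc := hconv x0 m S hm (le_trans hS hmax) t.
rewrite !hdelta in hc.
have hK : 0 <= alpha * phi rho ^+ t by rewrite mulr_ge0 // exprn_ge0 // hphi.
move: hS; rewrite /CS /invsqrtm; case: xgetP => [Q _ [[hQs _] hQQ] hS | hnone hS].
  have hL := loewner hHsym uH hQs hQQ hs0 hS.
  have ia : forall g, qform (invmx (HS A Lam nu S)) g g <=
      (1 - s)^-1 * qform (invmx (Hmat A Lam nu)) g g.
    apply: inv_order => //; first by rewrite invr_gt0 subr_gt0.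
    move=> v; have [h1 h2] := hL v; rewrite ler_pdivlMl ?subr_gt0 //; lra.
  have ib : forall g, qform (invmx (Hmat A Lam nu)) g g <=
      (1 + s) * qform (invmx (HS A Lam nu S)) g g.
    apply: inv_order => //; first by lra.
    move=> v; have [h1 h2] := hL v; lra.
  rewrite /delta_tilde.
  set gt := gradf A b Lam nu (iterate psi x0 (HS A Lam nu S) t) in hc *.
  set g0 := gradf A b Lam nu x0 in hc *.
  have := ia gt; have := ib g0.
  move: hc hK; set K := alpha * phi rho ^+ t.
  have hc1 : 0 < (1 - s)^-1 by rewrite invr_gt0 subr_gt0.
  have -> : (1 + s) / (1 - s) * alpha * phi rho ^+ t = (1 - s)^-1 * (1 + s) * K.
    by rewrite /K; ring.
  move: (qform (invmx (HS A Lam nu S)) gt gt) (qform (invmx (Hmat A Lam nu)) gt gt)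
    (qform (invmx (Hmat A Lam nu)) g0 g0) (qform (invmx (HS A Lam nu S)) g0 g0) hc1.
  move=> a1 b1 c1 e1 hc1 hc hK h1 h2.
  have s1 : K * c1 <= K * ((1 + s) * e1) by rewrite ler_wpM2l.
  have E2 : K * (2^-1 * c1) = 2^-1 * (K * c1) by ring.
  rewrite E2 in hc.
  have hb : b1 <= K * c1 by lra.
  have s2 : (1 - s)^-1 * b1 <= (1 - s)^-1 * (K * c1) by rewrite ler_wpM2l // ltW.
  have s3 : (1 - s)^-1 * (K * c1) <= (1 - s)^-1 * (K * ((1 + s) * e1)) by rewrite ler_wpM2l // ltW.
  have E : (1 - s)^-1 * (1 + s) * K * (2^-1 * e1) = 2^-1 * ((1 - s)^-1 * (K * ((1 + s) * e1))) by ring.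
  rewrite E; lra.
rewrite !mul0mx sub0r in hS.
case: (pselect (exists x : 'cV[R]_d, x != 0)) => [[x hx]|hz].
  exfalso; have := opnorm_bound (ltW hs0) hS x.
  rewrite mulNmx mul1mx dotN; have := dot_gt0 hx; nra.
have z : forall v : 'cV[R]_d, v = 0.
  by move=> v; case: (eqVneq v 0) => // h; exfalso; apply: hz; exists v.
rewrite /delta_tilde (z (gradf A b Lam nu (iterate psi x0 (HS A Lam nu S) t))).
by rewrite (z (gradf A b Lam nu x0)) q00 !mulr0.
Qed.
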